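(* Under the setup in the context, assume in addition that the block GMRES residual $F_{j-1}^{(G)}$ has rank $L$. Then $H_j$ is singular with $\operatorname{rank}H_j=(j-1)L$ if and only if block GMRES totally stagnates at step $j$, i.e. $X_j^{(G)}=X_{j-1}^{(G)}$.
   Context: Let $n,L\ge1$, $A\in\mathbb C^{n\times n}$, $B,X_0\in\mathbb C^{n\times L}$, $F_0=B-AX_0$, and let $F_0=V_1S_0$ be a reduced QR factorization ($V_1\in\mathbb C^{n\times L}$ with orthonormal columns, $S_0\in\mathbb C^{L\times L}$ upper triangular). Fix $j\ge2$. The block Arnoldi process (possibly with dependent basis vectors replaced by new orthonormal vectors) yields $W_k=[V_1,\dots,V_k]\in\mathbb C^{n\times kL}$ ($k\le j+1$) with orthonormal columns, $V_i\in\mathbb C^{n\times L}$, and the block Arnoldi relation $AW_j=W_{j+1}\bar H_j$, where $\bar H_j=(H_{ik})\in\mathbb C^{(j+1)L\times jL}$ has $L\times L$ blocks $H_{ik}$, is block upper Hessenberg ($H_{ik}=0$ for $i>k+1$), and each $H_{k+1,k}$ is upper triangular. For $k\le j$, $\bar H_k$ denotes the leading $(k+1)L\times kL$ submatrix of $\bar H_j$ and $H_k$ the leading $kL\times kL$ submatrix. $E^{[m]}\in\mathbb R^{mL\times L}$ denotes the first $L$ columns of $I_{mL}$. Assume $\bar H_j$ has full column rank (hence so does each $\bar H_k$, $k\le j$). For $k\ge1$, the block GMRES iterate is $X_k^{(G)}=X_0+W_kY_k^{(G)}$, where $Y_k^{(G)}\in\mathbb C^{kL\times L}$ is the unique minimizer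 of $\|\bar H_kY-E^{[k+1]}S_0\|_F$ (Frobenius norm), and $F_k^{(G)}=B-AX_k^{(G)}$. *)

(* Defs.v *)
From HB Require Import structures.
From mathcomp Require Import all_boot all_order all_algebra.
Set Implicit Arguments. Unset Strict Implicit. Unset Printing Implicit Defensive.
Import Order.TTheory GRing.Theory Num.Theory.
Local Open Scope ring_scope.

Section Defs.
Variable C : numClosedFieldType.

Definition ctmx {m n} (M : 'M[C]_(m, n)) : 'M[C]_(n, m) := (map_mx Num.conj M)^T.

(* leading p x q submatrix (entries outside M are 0; only used with p <= m, q <= n) *)
Definition lsub {m n} (p q : nat) (M : 'M[C]_(m, n)) : 'M[C]_(p, q) :=
  \matrix_(i < p, k < q)
    (if @insub nat (fun x => x < m)%N 'I_m (val i) is Some i' then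
       if @insub nat (fun x => x < n)%N 'I_n (val k) is Some k' then M i' k' else 0
     else 0).

Definition Efirst (m L : nat) : 'M[C]_(m * L, L) :=
  \matrix_(i < m * L, k < L) (val i == val k)%:R.

Definition frob {m n} (M : 'M[C]_(m, n)) : C :=
  sqrtC (\sum_(i < m) \sum_(k < n) `|M i k| ^+ 2).

Definition upper_tri {L} (S : 'M[C]_L) : Prop :=
  forall i k : 'I_L, (k < i)%N -> S i k = 0.

(* block upper Hessenberg with L x L blocks and upper triangular subdiagonal blocks *)
Definition block_hess_ut (L : nat) {m n} (H : 'M[C]_(m, n)) : Prop :=
  forall (r : 'I_m) (c : 'I_n),
    [|| ((c %/ L)%N.+1 < (r %/ L)%N)%N
      | (((r %/ L)%N == (c %/ L)%N.+1) && ((c %% L)%N < (r %% L)%N)%N)] ->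
    H r c = 0.

Definition Hbar_k (L k : nat) {m n} (Hb : 'M[C]_(m, n)) : 'M[C]_(k.+1 * L, k * L) :=
  lsub (k.+1 * L) (k * L) Hb.

Definition gmres_min (L k : nat) {m n} (Hb : 'M[C]_(m, n)) (S0 : 'M[C]_L)
    (Y : 'M[C]_(k * L, L)) : Prop :=
  forall Y' : 'M[C]_(k * L, L),
    frob (Hbar_k L k Hb *m Y - Efirst k.+1 L *m S0)
      <= frob (Hbar_k L k Hb *m Y' - Efirst k.+1 L *m S0).

End Defs.
Arguments gmres_min {C} L k {m n} Hb S0 Y.

(* Main.v *)
Require Import Defs.
From HB Require Import structures.
From mathcomp Require Import all_boot all_order all_algebra zify.
Import Order.TTheory GRing.Theory Num.Theory.
Local Open Scope ring_scope.

Lemma ctmx_mul {C : numClosedFieldType} {m n p} (A : 'M[C]_(m, n)) (B : 'M[C]_(n, p)) :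
  ctmx (A *m B) = ctmx B *m ctmx A.
Proof. by rewrite /ctmx map_mxM trmx_mul. Qed.

Lemma ctmxK {C : numClosedFieldType} {m n} (A : 'M[C]_(m, n)) : ctmx (ctmx A) = A.
Proof. by apply/matrixP => i k; rewrite !mxE conjCK. Qed.

Lemma ctmxD {C : numClosedFieldType} {m n} (A B : 'M[C]_(m, n)) :
  ctmx (A + B) = ctmx A + ctmx B.
Proof. by apply/matrixP => i k; rewrite !mxE rmorphD. Qed.

Lemma ctmxN {C : numClosedFieldType} {m n} (A : 'M[C]_(m, n)) :
  ctmx (- A) = - ctmx A.
Proof. by apply/matrixP => i k; rewrite !mxE rmorphN. Qed.

Lemma ctmx0 {C : numClosedFieldType} m n : ctmx (0 : 'M[C]_(m, n)) = 0.
Proof. by apply/matrixP => i k; rewrite !mxE rmorph0. Qed.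

Definition T2 {C : numClosedFieldType} {m n} (M : 'M[C]_(m, n)) := \tr (ctmx M *m M).

Lemma T2E {C : numClosedFieldType} {m n} (M : 'M[C]_(m, n)) :
  T2 M = \sum_(i < m) \sum_(k < n) `|M i k| ^+ 2.
Proof.
rewrite /T2 /mxtrace exchange_big /=; apply: eq_bigr => k _.
rewrite mxE; apply: eq_bigr => i _; by rewrite !mxE normCKC.
Qed.

Lemma T2_ge0 {C : numClosedFieldType} {m n} (M : 'M[C]_(m, n)) : 0 <= T2 M.
Proof. by rewrite T2E; apply: sumr_ge0 => i _; apply: sumr_ge0 => k _; apply: exprn_ge0. Qed.

Lemma T2_eq0 {C : numClosedFieldType} {m n} (M : 'M[C]_(m, n)) : T2 M = 0 -> M = 0.
Proof.
rewrite T2E => H; apply/matrixP => i k; rewrite mxE.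
have H1 := psumr_eq0P (fun i _ => sumr_ge0 _ (fun k _ => exprn_ge0 2 (normr_ge0 (M i k)))) H.
have H2 := H1 i isT.
have H3 := psumr_eq0P (fun k _ => exprn_ge0 2 (normr_ge0 (M i k))) H2 (i:=k) isT.
by move/eqP: H3; rewrite expf_eq0 /= normr_eq0 => /eqP.
Qed.

Lemma frobE {C : numClosedFieldType} {m n} (M : 'M[C]_(m, n)) : frob M = sqrtC (T2 M).
Proof. by rewrite /frob T2E. Qed.

Lemma ctmx_mul_eq0 {C : numClosedFieldType} {m n} (M : 'M[C]_(m, n)) :
  ctmx M *m M = 0 -> M = 0.
Proof. by move=> H; apply: T2_eq0; rewrite /T2 H /mxtrace big1 // => i _; rewrite mxE. Qed.

Lemma T2D {C : numClosedFieldType} {m n} (A B : 'M[C]_(m, n)) :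
  ctmx A *m B = 0 -> T2 (A + B) = T2 A + T2 B.
Proof.
move=> H.
have H' : ctmx B *m A = 0 by rewrite -[A]ctmxK -ctmx_mul H ctmx0.
rewrite /T2 ctmxD mulmxDl !mulmxDr H H' !addr0 mxtraceD.
by rewrite add0r.
Qed.

Lemma colfree_inj {C : numClosedFieldType} {a b c} (G : 'M[C]_(a, b)) (v : 'M[C]_(b, c)) :
  \rank G = b -> G *m v = 0 -> v = 0.
Proof.
move=> hr H.
have hk : kermx G^T == 0 by rewrite kermx_eq0 /row_free mxrank_tr hr.
have : (v^T <= kermx G^T)%MS by apply/sub_kermxP; rewrite -trmx_mul H trmx0.
rewrite (eqP hk) => /submx0null h.
by apply: trmx_inj; rewrite h trmx0.
Qed.

Lemma ctG_unit {C : numClosedFieldType} {a b} (G : 'M[C]_(a, b)) :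
  \rank G = b -> ctmx G *m G \in unitmx.
Proof.
move=> hr; rewrite -row_free_unit -kermx_eq0.
set K := kermx _.
have hK : K *m (ctmx G *m G) = 0 by apply: mulmx_ker.
have h1 : G *m ctmx K = 0.
  apply: ctmx_mul_eq0; by rewrite ctmx_mul ctmxK !mulmxA -(mulmxA K) hK mul0mx.
have h2 := colfree_inj _ _ hr h1.
by rewrite -[K]ctmxK h2 ctmx0.
Qed.

Lemma ls_normal {C : numClosedFieldType} {a b c} (G : 'M[C]_(a, b)) (R : 'M[C]_(a, c))
    (Y : 'M[C]_(b, c)) :
  \rank G = b ->
  (forall Y' : 'M[C]_(b, c), frob (G *m Y - R) <= frob (G *m Y' - R)) ->
  ctmx G *m (G *m Y - R) = 0.
Proof.
move=> hr hmin.
set N := ctmx G *m G.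
have hN : N \in unitmx by apply: ctG_unit.
set Ys := invmx N *m (ctmx G *m R).
have hs : ctmx G *m (G *m Ys - R) = 0.
  by rewrite mulmxBr mulmxA /Ys mulmxA mulmxV // mul1mx subrr.
have hdec : G *m Y - R = G *m (Y - Ys) + (G *m Ys - R).
  by rewrite mulmxBr addrA subrK.
have horth : ctmx (G *m (Y - Ys)) *m (G *m Ys - R) = 0.
  by rewrite ctmx_mul -mulmxA hs mulmx0.
have := hmin Ys; rewrite !frobE ler_sqrtC ?nnegrE ?T2_ge0 //.
rewrite hdec (T2D _ _ horth) gerDr => hle.
have h0 : T2 (G *m (Y - Ys)) = 0 by apply/eqP; rewrite eq_le hle T2_ge0.
have := colfree_inj _ _ hr (T2_eq0 _ h0).
move/eqP; rewrite subr_eq0 => /eqP hY; by rewrite hY subrr mulmx0 add0r.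
Qed.

Lemma lsubE {C : numClosedFieldType} {m n} (p q : nat) (M : 'M[C]_(m, n)) (i : 'I_p) (k : 'I_q)
  (hi : (val i < m)%N) (hk : (val k < n)%N) : lsub p q M i k = M (Ordinal hi) (Ordinal hk).
Proof.
rewrite /lsub mxE (insubT (fun x => x < m)%N hi) (insubT (fun x => x < n)%N hk).
by congr (M _ _); apply: val_inj.
Qed.

Lemma lsub0 {C : numClosedFieldType} {m n} (p q : nat) (M : 'M[C]_(m, n)) (i : 'I_p) (k : 'I_q) :
  ~~ ((val i < m) && (val k < n))%N -> lsub p q M i k = 0.
Proof.
rewrite negb_and => /orP [h|h]; rewrite /lsub mxE.
  by rewrite insubN.
by case: insubP => // ? _ _; rewrite insubN.
Qed.

Definition Pm {C : numClosedFieldType} (a b : nat) : 'M[C]_(a, b) :=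
  \matrix_(i < a, k < b) (val i == val k)%:R.

Lemma lsub_mulr {C : numClosedFieldType} {m n} k (M : 'M[C]_(m, n)) :
  lsub m k M = M *m Pm n k.
Proof.
apply/matrixP => i j; rewrite [RHS]mxE.
case: (ltnP j n) => hj.
  rewrite (lsubE _ _ _ _ _ (ltn_ord i) hj) (bigD1 (Ordinal hj)) //= big1.
    rewrite !mxE /= eqxx mulr1 addr0; congr (M _ _); exact: val_inj.
  move=> l hl; rewrite !mxE; case: eqP => [e|]; last by rewrite mulr0.
  by case/eqP: hl; apply: val_inj.
rewrite lsub0; last by rewrite negb_and; apply/orP; right; rewrite -leqNgt.
rewrite big1 // => l _; rewrite !mxE; case: eqP => [e|]; last by rewrite mulr0.
by move: (ltn_ord l); rewrite e ltnNge hj.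
Qed.

Lemma lsub_mull {C : numClosedFieldType} {m n} k (M : 'M[C]_(m, n)) :
  lsub k n M = Pm k m *m M.
Proof.
apply/matrixP => i j; rewrite [RHS]mxE.
case: (ltnP i m) => hi.
  rewrite (lsubE _ _ _ _ _ hi (ltn_ord j)) (bigD1 (Ordinal hi)) //= big1.
    rewrite !mxE /= eqxx mul1r addr0; congr (M _ _); exact: val_inj.
  move=> l hl; rewrite !mxE; case: eqP => [e|]; last by rewrite mul0r.
  by case/eqP: hl; apply: val_inj.
rewrite lsub0; last by rewrite negb_and; apply/orP; left; rewrite -leqNgt.
rewrite big1 // => l _; rewrite !mxE; case: eqP => [e|]; last by rewrite mul0r.
by move: (ltn_ord l); rewrite -e ltnNge hi.
Qed.

Lemma Pm_id {C : numClosedFieldType} a : Pm a a = 1%:M :> 'M[C]_a.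
Proof. by apply/matrixP => i j; rewrite !mxE val_eqE. Qed.

Lemma lsub_id {C : numClosedFieldType} {m n} (M : 'M[C]_(m, n)) : lsub m n M = M.
Proof. by rewrite lsub_mulr Pm_id mulmx1. Qed.

Lemma Pm_mul {C : numClosedFieldType} a b c : (minn a c <= b)%N ->
  Pm a b *m Pm b c = Pm a c :> 'M[C]_(a, c).
Proof.
move=> h; rewrite -lsub_mulr; apply/matrixP => i j.
case: (ltnP j b) => hj.
  by rewrite (lsubE _ _ _ _ _ (ltn_ord i) hj) !mxE.
rewrite lsub0; last by rewrite negb_and; apply/orP; right; rewrite -leqNgt.
rewrite mxE; case: eqP => // e.
have := leq_trans h hj; rewrite geq_min => /orP [hh|hh].
  by move: (ltn_ord i); rewrite ltnNge e hh.
by move: (ltn_ord j); rewrite ltnNge hh.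
Qed.

Lemma ctmx_Pm {C : numClosedFieldType} a b : ctmx (Pm a b) = Pm b a :> 'M[C]_(b, a).
Proof. by apply/matrixP => i j; rewrite !mxE rmorph_nat eq_sym. Qed.

Lemma tr_Pm {C : numClosedFieldType} a b : (Pm a b)^T = Pm b a :> 'M[C]_(b, a).
Proof. by apply/matrixP => i j; rewrite !mxE eq_sym. Qed.

Lemma rank_Pm {C : numClosedFieldType} a b : (a <= b)%N -> \rank (Pm a b : 'M[C]_(a, b)) = a.
Proof.
move=> h; apply/eqP; rewrite eqn_leq rank_leq_row /=.
have e : Pm a b *m Pm b a = 1%:M :> 'M[C]_a by rewrite Pm_mul ?Pm_id // minnn.
by rewrite -{1}(mxrank1 C a) -e mxrankM_maxl.
Qed.

Lemma rank_ctmx {C : numClosedFieldType} m n (M : 'M[C]_(m, n)) : \rank (ctmx M) = \rank M.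
Proof. by rewrite /ctmx mxrank_tr mxrank_map. Qed.

Lemma rank_iso {C : numClosedFieldType} m n k (U : 'M[C]_(m, n)) (M : 'M[C]_(n, k)) :
  ctmx U *m U = 1%:M -> \rank (U *m M) = \rank M.
Proof.
move=> h; apply/eqP; rewrite eqn_leq mxrankM_maxr /=.
by rewrite -{1}(mul1mx M) -h -mulmxA mxrankM_maxr.
Qed.

Lemma lsub2 {C : numClosedFieldType} {m n} p q (M : 'M[C]_(m, n)) :
  lsub p q M = Pm p m *m M *m Pm n q.
Proof.
rewrite -lsub_mull -lsub_mulr; apply/matrixP => i k.
case: (ltnP k n) => hk; last first.
  by rewrite !lsub0 //; rewrite negb_and; apply/orP; right; rewrite -leqNgt.
rewrite [RHS](lsubE _ _ _ _ _ (ltn_ord i) hk).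
case: (ltnP i m) => hi.
  rewrite (lsubE _ _ _ i k hi hk).
  by rewrite (lsubE _ _ _ (Ordinal (ltn_ord i)) (Ordinal hk) hi hk).
rewrite lsub0; last by rewrite negb_and; apply/orP; left; rewrite -leqNgt.
by rewrite lsub0 //=; rewrite negb_and; apply/orP; left; rewrite -leqNgt.
Qed.

Lemma unit_mul0 {C : numClosedFieldType} {b c} (N : 'M[C]_b) (v : 'M[C]_(b, c)) :
  N \in unitmx -> N *m v = 0 -> v = 0.
Proof. by move=> hN h; rewrite -(mulKmx hN v) h mulmx0. Qed.

Lemma hess_cols {C : numClosedFieldType} p L (Hb : 'M[C]_(p.+2 * L, p.+1 * L)) :
  (0 < L)%N -> block_hess_ut L Hb ->
  Hb *m Pm (p.+1 * L) (p * L) = Pm (p.+2 * L) (p.+1 * L) *m lsub (p.+1 * L) (p * L) Hb.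
Proof.
move=> hL hH; rewrite -lsub_mulr -lsub_mull; apply/matrixP => i k.
have hab : (p * L <= p.+1 * L)%N by rewrite leq_mul2r leqnSn orbT.
have hk : (val k < p.+1 * L)%N by apply: leq_trans (ltn_ord k) hab.
rewrite (lsubE _ _ _ _ _ (ltn_ord i) hk).
case: (ltnP i (p.+1 * L)) => hi.
  by rewrite (lsubE _ _ _ _ _ hi (ltn_ord k)) (lsubE _ _ _ (Ordinal hi) (Ordinal (ltn_ord k)) (ltn_ord i) hk).
rewrite lsub0; last by rewrite negb_and; apply/orP; left; rewrite -leqNgt.
apply: hH; apply/orP; left => /=.
have h1 : (k %/ L < p)%N by rewrite ltn_divLR.
have h2 : (p.+1 <= i %/ L)%N by rewrite leq_divRL.
by apply: leq_trans h2; rewrite ltnS.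
Qed.

Lemma rank_Pm' {C : numClosedFieldType} a b : (a <= b)%N -> \rank (Pm b a : 'M[C]_(b, a)) = a.
Proof. by move=> h; rewrite -mxrank_tr tr_Pm rank_Pm. Qed.


Theorem mainTheorem6 (C : numClosedFieldType) (n L j : nat)
    (hL : (1 <= L)%N) (hn : (1 <= n)%N) (hj : (2 <= j)%N)
    (A : 'M[C]_n) (B X0 : 'M[C]_(n, L))
    (W : 'M[C]_(n, j.+1 * L)) (Hb : 'M[C]_(j.+1 * L, j * L)) (S0 : 'M[C]_L)
    (hW : ctmx W *m W = 1%:M)
    (hF0 : B - A *m X0 = lsub n L W *m S0)
    (hS0 : upper_tri S0)
    (hArn : A *m lsub n (j * L) W = W *m Hb)
    (hHess : block_hess_ut L Hb)
    (hrank : \rank Hb = (j * L)%N)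
    (Yjm1 : 'M[C]_(j.-1 * L, L)) (Yj : 'M[C]_(j * L, L))
    (hYjm1 : gmres_min L j.-1 Hb S0 Yjm1)
    (hYj : gmres_min L j Hb S0 Yj)
    (hFrank : \rank (B - A *m (X0 + lsub n (j.-1 * L) W *m Yjm1)) = L) :
  (lsub (j * L) (j * L) Hb \notin unitmx /\
     \rank (lsub (j * L) (j * L) Hb) = (j.-1 * L)%N)
  <-> X0 + lsub n (j * L) W *m Yj = X0 + lsub n (j.-1 * L) W *m Yjm1.
Proof.
case: j hj W Hb hW hF0 hArn hHess hrank Yjm1 Yj hYjm1 hYj hFrank => [|p] // hp W Hb hW hF0 hArn hHess hrank Yp Yj hYp hYj hFrank /=.
rewrite /= in hYp hFrank.
have hab : (p * L <= p.+1 * L)%N by rewrite leq_mul2r leqnSn orbT.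
have hbc : (p.+1 * L <= p.+2 * L)%N by rewrite leq_mul2r leqnSn orbT.
have hLb : (L <= p.+1 * L)%N by rewrite mulSn leq_addr.
have eWb : lsub n (p.+1 * L) W = W *m Pm _ _ by rewrite lsub_mulr.
have hWb : ctmx (lsub n (p.+1 * L) W) *m lsub n (p.+1 * L) W = 1%:M.
  rewrite eWb ctmx_mul -mulmxA (mulmxA (ctmx W)) hW mul1mx ctmx_Pm Pm_mul ?Pm_id //; nia.
have eWa : lsub n (p * L) W = lsub n (p.+1 * L) W *m Pm _ (p * L).
  by rewrite eWb lsub_mulr -mulmxA Pm_mul //; nia.
have eV1 : lsub n L W = lsub n (p.+1 * L) W *m Pm _ L.
  by rewrite eWb lsub_mulr -mulmxA Pm_mul //; nia.
have eE1 : Efirst C p.+1 L = Pm (p.+1 * L) L :> 'M[C]_(_, _) by [].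
have eE2 : Efirst C p.+2 L = Pm (p.+2 * L) (p.+1 * L) *m Pm (p.+1 * L) L :> 'M[C]_(_, _).
  by rewrite Pm_mul //; nia.
set Gp := lsub (p.+1 * L) (p * L) Hb.
have hHS := hess_cols _ _ _ hL hHess.
rewrite -/Gp in hHS.
set Hj := lsub (p.+1 * L) (p.+1 * L) Hb.
have eHj : Hj = Pm _ _ *m Hb by rewrite /Hj lsub_mull.
have eGp : Gp = Hj *m Pm _ (p * L) by rewrite /Gp lsub2 eHj.
have rGp : \rank Gp = (p * L)%N.
  apply/eqP; rewrite eqn_leq rank_leq_col /=.
  apply: (leq_trans _ (mxrankM_maxr (Pm (p.+2 * L) (p.+1 * L)) Gp)).
  rewrite -hHS; apply: leq_trans (mxrank_mul_min _ _).
  rewrite hrank rank_Pm' //; nia.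
have rHj : (p * L <= \rank Hj)%N.
  rewrite eHj; apply: leq_trans (mxrank_mul_min _ _).
  rewrite hrank rank_Pm //; nia.
have nYj : ctmx Hb *m (Hb *m Yj - Efirst C p.+2 L *m S0) = 0.
  apply: ls_normal => //.
  by move: hYj; rewrite /gmres_min /Hbar_k lsub_id.
have nYp : ctmx Gp *m (Gp *m Yp - Efirst C p.+1 L *m S0) = 0.
  exact: ls_normal.
set r := Efirst C p.+1 L *m S0 - Gp *m Yp.
have nr : ctmx Gp *m r = 0 by rewrite /r -opprB mulmxN nYp oppr0.
have eF : B - A *m (X0 + lsub n (p * L) W *m Yp) = lsub n (p.+1 * L) W *m r.
  rewrite mulmxDr opprD addrA hF0 mulmxA eWa mulmxA hArn eV1.
  by rewrite -(mulmxA W) hHS mulmxA -eWb -!mulmxA -mulmxBr.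
have rr : \rank r = L by move: hFrank; rewrite eF rank_iso.
have key : ctmx Hb *m (Hb *m (Pm _ (p * L) *m Yp) - Efirst C p.+2 L *m S0) = - (ctmx Hj *m r).
  rewrite mulmxA hHS eE2 -!mulmxA -mulmxBr mulmxA -[ctmx Hb *m _]ctmxK ctmx_mul ctmxK ctmx_Pm.
  by rewrite -eHj /r eE1 !mulmxBr opprB.
have stag : X0 + lsub n (p.+1 * L) W *m Yj = X0 + lsub n (p * L) W *m Yp <-> ctmx Hj *m r = 0.
  split.
    move/addrI; rewrite eWa -mulmxA => e.
    have eY : Yj = Pm _ (p * L) *m Yp.
      by rewrite -(mul1mx Yj) -hWb -mulmxA e mulmxA hWb mul1mx.
    by apply/eqP; rewrite -oppr_eq0 -key -eY nYj.
  move=> h; congr (_ + _); rewrite eWa -mulmxA; congr (_ *m _).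
  have u := ctG_unit _ hrank.
  apply/eqP; rewrite -subr_eq0; apply/eqP; apply: (unit_mul0 _ _ u).
  have := key; rewrite h oppr0 => k2.
  have e : Hb *m (Yj - Pm _ (p * L) *m Yp) = (Hb *m Yj - Efirst C p.+2 L *m S0) - (Hb *m (Pm _ (p * L) *m Yp) - Efirst C p.+2 L *m S0).
    by rewrite opprB addrA subrK mulmxBr.
  by rewrite -mulmxA e mulmxBr nYj k2 subrr.
rewrite stag; split.
  move=> [_ hr] ; have hr' : \rank Hj = (p * L)%N by [].
  have s1 : (Gp^T <= Hj^T)%MS by rewrite eGp trmx_mul submxMl.
  have := mxrank_leqif_sup s1; rewrite !mxrank_tr rGp hr'.
  case=> _; rewrite eqxx => /esym /submxP [D eD].
  have eH : Hj = Gp *m D^T by rewrite -[Hj]trmxK eD trmx_mul trmxK.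
  by rewrite eH ctmx_mul -mulmxA nr mulmx0.
move=> h.
have le1 : (\rank Hj + L <= p.+1 * L)%N.
  have := mxrank_mul_min (ctmx Hj) r; rewrite h mxrank0 rank_ctmx rr leqn0 subn_eq0 //.
have eqr : \rank Hj = (p * L)%N.
  apply/eqP; rewrite eqn_leq rHj andbT.
  by rewrite -(leq_add2r L) (leq_trans le1) // mulSn addnC.
split => //.
apply/negP => /mxrank_unit; rewrite eqr => /eqP.
move/eqP; nia.
Qed.
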